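(* Let $n$ be a positive integer and for $i\in\{1,\dots,n\}$ let $G_i$ be a finite group equal to a semidirect product $N_i\rtimes H_i$ with $N_i\ne\{1\}$, such that: (1) $N_i\setminus\{1\}$ is a single conjugacy class of $G_i$ for every $i$; (2) $C_{N_i}(h)=\{1\}$ for all $h\in H_i\setminus\{1\}$ and every $i$; (3) $\prod_{i=1}^n H_i$ is MP. Then $\prod_{i=1}^n G_i$ is MP.
   Context: A group $G$ has the Magnus Property (MP) if whenever $x,y\in G$ have the same normal closure in $G$, $x$ is conjugate in $G$ to $y$ or to $y^{-1}$. $C_N(h)$ denotes the centralizer of $h$ in $N$. *)

(* Defs.v *)
From mathcomp Require Import all_boot all_fingroup all_solvable.
Set Implicit Arguments. Unset Strict Implicit. Unset Printing Implicit Defensive.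

Open Scope group_scope.

Definition MP (gT : finGroupType) (G : {set gT}) : Prop :=
  forall x y, x \in G -> y \in G ->
    <<x ^: G>> = <<y ^: G>> ->
    exists2 g, g \in G & (x ^ g = y \/ x ^ g = y^-1).

(* Main.v *)
Require Import Defs.
From mathcomp Require Import all_boot all_fingroup all_solvable.

Lemma frob_conj (gT : finGroupType) (N H G : {group gT}) h n :
  N ><| H = G -> h \in H -> 'C_N[h] = 1 -> n \in N ->
  exists2 a, a \in N & h ^ a = n * h.
Proof.
move=> defG Hh cNh Nn.
have [nsNG _ _ nNH _] := sdprod_context defG.
have sub: h ^: N \subset N :* h.
  apply/subsetP=> _ /imsetP[a Na ->]; rewrite mem_rcoset.
  have e: h ^ a * h^-1 = a^-1 * a ^ h^-1 by rewrite /conjg invgK !mulgA.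
  by rewrite e groupM ?groupV // memJ_norm // groupV (subsetP nNH).
have eq: h ^: N = N :* h.
  by apply/eqP; rewrite eqEcard sub card_rcoset -index_cent1 cNh indexg1 leqnn.
have: n * h \in h ^: N by rewrite eq mem_rcoset mulgK.
by case/imsetP=> a Na e; exists a.
Qed.

Lemma conj_prod_coord (gT : finGroupType) (n : nat) (G : 'I_n -> {group gT})
  (g : 'I_n -> gT) (r : seq 'I_n) i u :
  (forall a b, a != b -> G a \subset 'C(G b)) -> (forall j, g j \in G j) ->
  uniq r -> u \in G i ->
  u ^ (\prod_(j <- r) g j) = if i \in r then u ^ g i else u.
Proof.
move=> cG Gg; elim: r u => [|a r IH] u /=; first by rewrite big_nil conjg1.
case/andP=> ar ur Gu; rewrite big_cons conjgM in_cons.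
move: ar; case: (eqVneq i a) => [<- ar|ne _].
  by rewrite IH ?groupJ // (negPf ar).
have cu: commute u (g a).
  have : g a \in 'C(G i).
    by have := cG a i; rewrite eq_sym ne => /(_ isT) /subsetP; apply.
  by move/centP/(_ u Gu)/esym.
have ->: u ^ g a = u by rewrite /conjg cu mulKg.
by rewrite IH.
Qed.

Lemma ncl_sub (gT : finGroupType) (G : {group gT}) x z :
  z \in <<x ^: G>> -> <<z ^: G>> \subset <<x ^: G>>.
Proof.
move=> zx; rewrite gen_subG; apply/subsetP => _ /imsetP[g Gg ->].
by rewrite memJ_norm // (subsetP (norms_gen (class_norm x G))).
Qed.

Lemma ncl_V (gT : finGroupType) (G : {group gT}) y :
  y \in G -> <<y^-1 ^: G>> = <<y ^: G>>.
Proof.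
move=> Gy; apply/eqP; rewrite eqEsubset !ncl_sub //.
  by rewrite -[y in y \in _]invgK groupV mem_gen // class_refl.
by rewrite groupV mem_gen // class_refl.
Qed.

Theorem proposition4p1 (gT : finGroupType) (n : nat)
  (N H G : 'I_n -> {group gT}) (GG HH : {group gT}) :
  0 < n ->
  (forall i, N i ><| H i = G i) ->
  (forall i, N i :!=: 1) ->
  (forall i, (N i)^# \in classes (G i)) ->
  (forall i h, h \in (H i)^# -> 'C_(N i)[h] = 1) ->
  \big[dprod/1]_(i < n) G i = GG ->
  \big[dprod/1]_(i < n) H i = HH ->
  MP HH ->
  MP GG.
Proof.
move=> _ defG _ clN frobH defGG defHH mpH.
have Ki : forall i, exists K : {group gT},
    G i \x K = GG /\ \big[dprod/1]_(j < n | j != i) G j = K.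
  move=> i; have := defGG; rewrite (bigD1 i) //= => defi.
  have [[_ K _ defK] _ _ _] := dprodP defi.
  by exists K; split; rewrite // -defK.
have cG : forall a b, a != b -> G a \subset 'C(G b).
  move=> a b ne; have [K [dK defK]] := Ki b; have [_ _ cK _] := dprodP dK.
  apply: subset_trans cK; rewrite -(bigdprodWY defK); apply: sub_gen.
  exact: (bigcup_sup a).
have sGG : forall i, G i \subset GG.
  by move=> i; have [K [dK _]] := Ki i; rewrite -(dprodW dK) mulG_subl.
have compK : forall i (K : {group gT}), G i \x K = GG ->
    \big[dprod/1]_(j < n | j != i) G j = K ->
    forall c : 'I_n -> gT, (forall j, c j \in G j) ->
    (\prod_(j < n) c j \in K) = (c i == 1).
  move=> i K dK defK c Gc; apply/idP/eqP.
    move=> Kx; have [d [Gd ed _]] := mem_bigdprod defK Kx.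
    pose e := fun j => if j != i then d j else 1.
    have Ge : forall j, true -> e j \in G j.
      by move=> j _; rewrite /e; case: ifP => [/Gd|_]; rewrite ?group1.
    have ee : \prod_(j < n) c j = \prod_(j < n) e j by rewrite ed big_mkcond.
    have GGx : \prod_(j < n) c j \in GG.
      by apply: group_prod => j _; apply: subsetP (sGG j) _ _.
    have [c0 [_ _ uniq0]] := mem_bigdprod defGG GGx.
    have h1 := uniq0 c (fun j _ => Gc j) (erefl _) i isT.
    have h2 := uniq0 e Ge ee i isT.
    by rewrite h1 -h2 /e eqxx.
  move=> ci1; rewrite -(bigdprodW defK).
  have -> : \prod_(j < n) c j = \prod_(j < n | j != i) c j.
    by rewrite [RHS]big_mkcond; apply: eq_bigr => j _; case: (eqVneq j i) => [->|].
  by apply: mem_prodg => j _; exact: Gc.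
pose NN := (<<\bigcup_(i < n) N i>>)%G.
have sNNi : forall i, N i \subset NN.
  by move=> i; apply: sub_gen; exact: (bigcup_sup i).
have sHHi : forall i, H i \subset HH.
  by move=> i; rewrite -(bigdprodWY defHH); apply: sub_gen; exact: (bigcup_sup i).
have sNG : forall i, N i \subset G i.
  by move=> i; have [/andP[]] := sdprod_context (defG i).
have sHG : forall i, H i \subset G i.
  by move=> i; have [] := sdprod_context (defG i).
have sHHGG : HH \subset GG.
  rewrite -(bigdprodWY defHH) gen_subG; apply/bigcupsP => i _.
  exact: subset_trans (sHG i) (sGG i).
have sNNGG : NN \subset GG.
  rewrite gen_subG; apply/bigcupsP => i _.
  exact: subset_trans (sNG i) (sGG i).
have nNNHH : HH \subset 'N(NN).
  rewrite -(bigdprodWY defHH) gen_subG; apply/bigcupsP => i _.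
  apply: norms_gen; apply: norms_bigcup; apply/bigcapsP => j _.
  case: (eqVneq i j) => [<-|ne].
    by have [] := sdprod_context (defG i).
  apply: cents_norm; apply: subset_trans (sHG i) _.
  apply: subset_trans (cG i j ne) _; exact: centS.
have tiNH : NN :&: HH = 1.
  apply/trivgP/subsetP => z /setIP[Nz Hz].
  have: z \in (\prod_(i < n) N i)%G by rewrite bigprodGE.
  rewrite comm_prodG; last first.
    move=> i j _ _; case: (eqVneq i j) => [->|ne] //.
    apply: centC; apply: subset_trans (sNG i) _.
    apply: subset_trans (cG i j ne) _; exact: centS.
  case/prodsgP => c Nc ez.
  move: Hz; rewrite -(bigdprodW defHH) => /prodsgP[d Hd ez'].
  have GGz : z \in GG by apply: subsetP sHHGG _ _; rewrite -(bigdprodW defHH) ez'; apply: mem_prodg.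
  have [c0 [_ _ uniq0]] := mem_bigdprod defGG GGz.
  have c1 : forall i, c i = 1.
    move=> i; have h1 := uniq0 c (fun j _ => subsetP (sNG j) _ (Nc j isT)) ez i isT.
    have h2 := uniq0 d (fun j _ => subsetP (sHG j) _ (Hd j isT)) ez' i isT.
    have [_ _ _ _ ti] := sdprod_context (defG i).
    apply/set1P; rewrite -[[set 1]]/(1 : {set gT}) -ti inE Nc // h1 -h2 Hd //.
  by rewrite ez big1 ?set11 // => i _; rewrite c1.
have mulNH : NN * HH = GG.
  apply/eqP; rewrite eqEsubset mul_subG //=.
  rewrite -norm_joinEr // -(bigdprodWY defGG) gen_subG; apply/bigcupsP => i _.
  rewrite -(sdprodW (defG i)) mul_subG //.
    exact: subset_trans (sNNi i) (joing_subl _ _).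
  exact: subset_trans (sHHi i) (joing_subr _ _).
have sdNH : NN ><| HH = GG by rewrite sdprodE.
have [nsNN _ _ _ _] := sdprod_context sdNH.
pose pi := Morphism (remgrM (sdprod_compl sdNH) nsNN).
have pi_id : forall h, h \in HH -> pi h = h by move=> h Hh; apply: remgr_id.
have piGG : pi @* GG = HH.
  rewrite morphimEdom; apply/eqP; rewrite eqEsubset; apply/andP; split.
    by apply/subsetP => _ /imsetP[x Gx ->]; apply: mem_remgr; rewrite mulNH.
  apply/subsetP => h Hh; apply/imsetP; exists h; first exact: subsetP sHHGG _ _.
  by rewrite pi_id.
have ncl_pi : forall x, x \in GG -> pi @* <<x ^: GG>> = <<pi x ^: HH>>.
  by move=> x Gx; rewrite morphim_gen ?class_subG // morphim_class // piGG.
have piHH : forall x, x \in GG -> pi x \in HH.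
  by move=> x Gx; rewrite -piGG mem_morphim.
have pi_comp : forall c : 'I_n -> gT, (forall j, c j \in G j) ->
    pi (\prod_(j < n) c j) = \prod_(j < n) remgr (N j) (H j) (c j).
  move=> c Gc; rewrite morph_prod; last by move=> j _; apply: subsetP (sGG j) _ _.
  apply: eq_bigr => j _.
  have cNH : c j \in N j * H j by rewrite (sdprodW (defG j)).
  rewrite {1}(divgr_eq (N j) (H j) (c j)) /= remgrMid //.
    by apply: subsetP (sNNi j) _ _; apply: mem_divgr.
  by apply: subsetP (sHHi j) _ _; apply: mem_remgr.
have core : forall x y, x \in GG -> y \in GG -> <<x ^: GG>> = <<y ^: GG>> ->
    pi x = pi y -> exists2 g, g \in GG & x ^ g = y.
  move=> x y Gx Gy ncl pxy.
  have [c [Gc ex _]] := mem_bigdprod defGG Gx.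
  have [d [Gd ey _]] := mem_bigdprod defGG Gy.
  have Gc' : forall j, c j \in G j by move=> j; exact: Gc.
  have Gd' : forall j, d j \in G j by move=> j; exact: Gd.
  have cNH : forall j, c j \in N j * H j by move=> j; rewrite (sdprodW (defG j)).
  have dNH : forall j, d j \in N j * H j by move=> j; rewrite (sdprodW (defG j)).
  have hxy : forall j, remgr (N j) (H j) (c j) = remgr (N j) (H j) (d j).
    have [e [_ _ ue]] := mem_bigdprod defHH (piHH x Gx).
    move=> j.
    have h1 := ue _ (fun j _ => mem_remgr (cNH j)) (etrans (congr1 pi ex) (pi_comp c Gc')) j isT.
    have h2 := ue _ (fun j _ => mem_remgr (dNH j)) (etrans (etrans pxy (congr1 pi ey)) (pi_comp d Gd')) j isT.
    by rewrite h1 h2.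
  have gi : forall i, exists g, g \in G i /\ c i ^ g = d i.
    move=> i; have [K [dK defK]] := Ki i.
    have [_ nsK] := dprod_normal2 dK.
    set hx := remgr (N i) (H i) (c i).
    have ecx : c i = divgr (N i) (H i) (c i) * hx := divgr_eq _ _ _.
    have ecy : d i = divgr (N i) (H i) (d i) * hx.
      by rewrite /hx hxy; apply: divgr_eq.
    have Nnx := mem_divgr (cNH i).
    have Nny := mem_divgr (dNH i).
    have Hhx : hx \in H i := mem_remgr (cNH i).
    have clK : forall z w, <<z ^: GG>> = <<w ^: GG>> -> z \in K -> w \in K.
      move=> z w e zK.
      have sub: <<z ^: GG>> \subset K.
        rewrite gen_subG; apply/subsetP => _ /imsetP[g Gg ->].
        by rewrite memJ_norm // (subsetP (normal_norm nsK)).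
      by apply: (subsetP sub); rewrite e mem_gen // class_refl.
    have xK : (x \in K) = (c i == 1) by rewrite ex; apply: compK.
    have yK : (y \in K) = (d i == 1) by rewrite ey; apply: compK.
    case: (eqVneq hx 1) => [h1|hn1].
      have cN : c i \in N i by rewrite ecx h1 mulg1.
      have dN : d i \in N i by rewrite ecy h1 mulg1.
      case: (eqVneq (c i) 1) => [c1|c1].
        exists 1; split; first exact: group1.
        rewrite conjg1 c1; apply/esym/eqP; rewrite -yK; apply: clK ncl _.
        by rewrite xK c1.
      have d1 : d i != 1.
        apply/negP; rewrite -yK => yK'; move/negP: c1; apply; rewrite -xK.
        exact: clK (esym ncl) yK'.
      have [z Gz ez] : exists2 z, z \in G i & (N i)^# = z ^: G i.
        by apply/imsetP; exact: clN.
      have: c i \in z ^: G i by rewrite -ez !inE c1.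
      case/imsetP => a Ga ca.
      have: d i \in z ^: G i by rewrite -ez !inE d1.
      case/imsetP => b Gb db.
      exists (a^-1 * b); split; first by rewrite groupM ?groupV.
      by rewrite ca db conjgM conjgK.
    have Hh : hx \in (H i)^# by rewrite !inE hn1.
    have [a Na ea] := frob_conj _ _ _ _ _ _ (defG i) Hhx (frobH i hx Hh) Nnx.
    have [b Nb eb] := frob_conj _ _ _ _ _ _ (defG i) Hhx (frobH i hx Hh) Nny.
    exists (a^-1 * b); split.
      by rewrite groupM ?groupV // (subsetP (sNG i)).
    have -> : c i = hx ^ a by rewrite ea; exact: ecx.
    by rewrite ecy -eb conjgM conjgK.
  have [g Pg] := fin_all_exists gi.
  exists (\prod_(i < n) g i).
    by apply: group_prod => i _; apply: subsetP (sGG i) _ _; case: (Pg i).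
  rewrite ex ey.
  rewrite (big_morph (fun z => z ^ (\prod_(i < n) g i)) (fun a b => conjMg a b _) (conj1g _)).
  apply: eq_bigr => i _.
  rewrite (conj_prod_coord _ _ _ _ _ i _ cG) ?index_enum_uniq ?mem_index_enum //.
    by case: (Pg i).
  by move=> j; case: (Pg j).
move=> x y Gx Gy ncl.
have nclH : <<pi x ^: HH>> = <<pi y ^: HH>> by rewrite -!ncl_pi // ncl.
have [h Hh eh] := mpH _ _ (piHH x Gx) (piHH y Gy) nclH.
have Gh : h \in GG by apply: subsetP sHHGG _ _.
have [y' [Gy' ny' py' yy']] : exists y', [/\ y' \in GG,
    <<y' ^: GG>> = <<y ^: GG>>, pi (x ^ h) = pi y' & (y' = y \/ y' = y^-1)].
  case: eh => e.
    exists y; split => //; last by left.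
    by rewrite morphJ // (pi_id h Hh) e.
  exists y^-1; split; last by right.
  - by rewrite groupV.
  - by rewrite ncl_V.
  - by rewrite morphJ // morphV // (pi_id h Hh) e.
have e1 : <<(x ^ h) ^: GG>> = <<y' ^: GG>> by rewrite classGidl // ncl ny'.
have [g Gg eg] := core (x ^ h) y' (groupJ Gx Gh) Gy' e1 py'.
exists (h * g); first by rewrite groupM.
by rewrite conjgM eg; case: yy' => ->; [left|right].
Qed.
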